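(* Let $G=(V,E)$ be a graph whose edge set can be decomposed into the edge set of a spanning bipartite subgraph $H'$ of $G$ with no connected component consisting of a single edge and a set $M'$ of edges forming a matching. Then $G$ admits a partial edge colouring with $16$ colours such that all edges of $G$ are satisfied.
   Context: For an edge $e=uv$, $E[e]$ is the set of edges incident with $u$ or $v$ and $E(e)=E[e]\setminus\{e\}$. In a partial edge colouring (not all edges need be coloured), a colour $\alpha$ is unique for $e$ if $\alpha$ appears on some edge $e'\in E(e)$ and on no other edge of $E[e]\setminus\{e'\}$; $e$ is satisfied if such a colour exists. ''Spanning'' means $V(H')=V$; here $H'$ is assumed to have no isolated vertices (every vertex of $V$ lies in a component of $H'$ with at least two edges). *)

(* Defs.v *)
From mathcomp Require Import all_boot.
Set Implicit Arguments. Unset Strict Implicit. Unset Printing Implicit Defensive.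

Section Defs.
Variable T : finType.

Definition simple_graph (g : rel T) : Prop := symmetric g /\ irreflexive g.

Definition edges (g : rel T) : {set {set T}} :=
  [set [set x; y] | x in T, y in T & g x y].

Definition Eclosed (g : rel T) (a : {set T}) : {set {set T}} :=
  [set f in edges g | f :&: a != set0].
Definition Eopen (g : rel T) (a : {set T}) : {set {set T}} := Eclosed g a :\ a.

Definition pcolouring (k : nat) := {set T} -> option 'I_k.

Definition unique_colour (g : rel T) k (c : pcolouring k) (a : {set T}) (al : 'I_k) : Prop :=
  exists2 a', a' \in Eopen g a &
    c a' = Some al /\ (forall a'', a'' \in Eclosed g a :\ a' -> c a'' <> Some al).

Definition satisfied (g : rel T) k (c : pcolouring k) (a : {set T}) : Prop :=
  exists al, unique_colour g c a al.

Definition matching (M : {set {set T}}) : Prop :=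
  forall a b, a \in M -> b \in M -> a != b -> a :&: b = set0.

Definition bipartite_edges (H : {set {set T}}) : Prop :=
  exists col : T -> bool, forall x y, [set x; y] \in H -> col x != col y.

Definition adjH (H : {set {set T}}) : rel T := fun x y => [set x; y] \in H.

(* spanning, no isolated vertices and no single-edge component: every vertex
   lies in a component of H (w.r.t. connectivity in H) containing at least two edges *)
Definition spanning_no_K2_component (H : {set {set T}}) : Prop :=
  forall v : T, exists a b : {set T}, [/\ a \in H, b \in H, a != b &
     (exists2 x, x \in a & connect (adjH H) v x) /\
     (exists2 y, y \in b & connect (adjH H) v y)].
End Defs.

(* Main.v *)
Require Import Defs.
From mathcomp Require Import all_boot zify.
Set Implicit Arguments. Unset Strict Implicit. Unset Printing Implicit Defensive.
Lemma edgesP (T : finType) (g : rel T) e : reflect (exists x y, g x y /\ e = [set x; y]) (e \in edges g).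
Proof.
apply: (iffP imset2P).
  by case=> x y _; rewrite inE => gxy ->; exists x, y.
by case=> x [y [gxy ->]]; apply: (Imset2spec (x1:=x) (x2:=y)) => //; rewrite inE.
Qed.
Lemma set2_eq (T : finType) (x y x' y' : T) : [set x; y] = [set x'; y'] ->
  (x = x' /\ y = y') \/ (x = y' /\ y = x').
Proof.
move=> E.
have hx : x \in [set x'; y'] by rewrite -E !inE eqxx.
have hy : y \in [set x'; y'] by rewrite -E !inE eqxx orbT.
have hx' : x' \in [set x; y] by rewrite E !inE eqxx.
have hy' : y' \in [set x; y] by rewrite E !inE eqxx orbT.
move: hx hy hx' hy'; rewrite !inE.
by do 4 (case/orP=> /eqP ?); subst; auto.
Qed.

Lemma ar1 (a b : nat) : a = b.+1 -> (a %% 3 = b %% 3 \/ b %% 3 = a.+1 %% 3) -> False.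
Proof. move=> ->; case; lia. Qed.

Lemma arKv (du dv : nat) (mu mv : bool) :
  (du %% 3 = dv %% 3 /\ mu != mv) \/ dv %% 3 = du.+1 %% 3 ->
  (2 * (dv %% 3) + mv != 2 * (du %% 3) + mu)%N.
Proof.
case=> [[h1]|h1]; case: mu; case: mv => //=; lia.
Qed.

Lemma arKc1 (du : nat) (mx mu : bool) : (2 * (du.+1 %% 3) + mx != 2 * (du %% 3) + mu)%N.
Proof. case: mx; case: mu; lia. Qed.

Lemma arKc2 (du dv : nat) (mx mu : bool) : (du %% 3 = dv %% 3 \/ dv %% 3 = du.+1 %% 3) ->
  (2 * (dv.+1 %% 3) + mx != 2 * (du %% 3) + mu)%N.
Proof. case=> h; case: mx; case: mu; lia. Qed.

Lemma ar_tri (du dv : nat) : [\/ du %% 3 = dv %% 3, dv %% 3 = du.+1 %% 3 | du %% 3 = dv.+1 %% 3].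
Proof.
have : du %% 3 = dv %% 3 \/ dv %% 3 = du.+1 %% 3 \/ du %% 3 = dv.+1 %% 3 by lia.
by case=> [|[]]; [constructor 1 | constructor 2 | constructor 3].
Qed.

Lemma ar_adj (du dv : nat) : dv = du.+1 \/ du = dv.+1 -> du %% 3 <> dv %% 3.
Proof. case=> ->; lia. Qed.
Section Main.
Variable T : finType.
Variables (g : rel T) (H M : {set {set T}}) (a : T -> bool).
Hypothesis gsym : symmetric g.
Hypothesis girr : irreflexive g.
Hypothesis HM : H :|: M = edges g.
Hypothesis Ha : forall x y, [set x; y] \in H -> a x != a y.
Hypothesis Hsp : spanning_no_K2_component H.
Hypothesis Mm : matching M.

Definition adj : rel T := adjH H.

Lemma adjC : symmetric adj.
Proof. by move=> x y; rewrite /adj /adjH setUC. Qed.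

Lemma H_edges e : e \in H -> e \in edges g.
Proof. by move=> he; rewrite -HM inE he. Qed.

Lemma edge_g x y : [set x; y] \in edges g -> g x y.
Proof.
case/edgesP=> x' [y' [gxy /set2_eq]] [[-> ->]|[-> ->]] //.
by rewrite gsym.
Qed.

Lemma edge_neq x y : [set x; y] \in edges g -> x != y.
Proof. move/edge_g; apply: contraTneq => ->; by rewrite girr. Qed.

Lemma adj_g x y : adj x y -> g x y.
Proof. by move/H_edges/edge_g. Qed.

Lemma adj_neq x y : adj x y -> x != y.
Proof. by move/H_edges/edge_neq. Qed.

Lemma adj_a x y : adj x y -> a x != a y.
Proof. exact: Ha. Qed.

Lemma edge_mem e x : e \in edges g -> x \in e -> exists y, e = [set x; y].
Proof.
case/edgesP=> u [v [_ ->]]; rewrite !inE => /orP[] /eqP ->.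
  by exists v.
by exists u; rewrite setUC.
Qed.

Lemma csym : connect_sym adj.
Proof. exact: sym_connect_sym adjC. Qed.

Definition m (x : T) : bool :=
  [exists y, ([set x; y] \in M) && (enum_rank x < enum_rank y)%N].

Lemma m_prop x y : [set x; y] \in M -> x != y -> m x != m y.
Proof.
have key : forall x y, [set x; y] \in M -> (enum_rank x < enum_rank y)%N -> m x && ~~ m y.
  move=> u v huv lt; apply/andP; split.
    by apply/existsP; exists v; rewrite huv lt.
  apply/existsP=> [[z /andP[hvz lt2]]].
  have [E|NE] := eqVneq [set u; v] [set v; z].
    case: (set2_eq E) => [[E1 E2]|[E1 E2]].
      by move: lt; rewrite E1 ltnn.
    by move: lt2; rewrite -E1 => /(ltn_trans lt); rewrite ltnn.
  have := Mm huv hvz NE; move/setP/(_ v); rewrite !inE !eqxx orbT /=.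
  by [].
move=> hxy nxy.
have : enum_rank x != enum_rank y by apply: contra nxy => /eqP/enum_rank_inj ->.
rewrite neq_ltn => /orP[] lt.
  by case/andP: (key _ _ hxy lt) => -> /negbTE ->.
rewrite setUC in hxy.
by case/andP: (key _ _ hxy lt) => -> /negbTE ->.
Qed.

Definition deg2 (w : T) : bool :=
  [exists y, exists z, [&& y != z, adj w y & adj w z]].

Lemma H_adj e x : e \in H -> x \in e -> exists y, e = [set x; y] /\ adj x y.
Proof.
move=> he hx; have [y Ey] := edge_mem (H_edges he) hx.
by exists y; split=> //; rewrite /adj /adjH -Ey.
Qed.

Lemma ex_deg2 v : exists w, connect adj v w && deg2 w.
Proof.
case: (boolP [exists w, connect adj v w && deg2 w]) => [/existsP[w hw]|/existsPn nd].
  by exists w.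
exfalso.
have nd' : forall w y z, connect adj v w -> adj w y -> adj w z -> y = z.
  move=> w y z cw ay az; apply/eqP/negPn/negP => nyz.
  have := nd w; rewrite cw /= => /negP; apply.
  by apply/existsP; exists y; apply/existsP; exists z; rewrite nyz ay az.
have [e [f [he hf nef [[x hxe cx] [y hyf cy]]]]] := Hsp v.
have [x' [Ee axx']] := H_adj he hxe.
have [y' [Ef ayy']] := H_adj hf hyf.
have cx' : connect adj v x' by apply: connect_trans cx (connect1 axx').
pose S := [set x; x'].
have clS : closed adj S.
  apply: (intro_closed csym) => w z awz; rewrite !inE => /orP[] /eqP Ew; subst w.
    by rewrite (nd' _ _ _ cx awz axx') eqxx orbT.
  by rewrite (nd' _ _ _ cx' awz (_ : adj x' x)) ?eqxx // adjC.
have cxy : connect adj x y by apply: connect_trans _ cy; rewrite csym.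
have yS : y \in S by rewrite -(closed_connect clS cxy) !inE eqxx.
have y'S : y' \in S by rewrite -(closed_connect clS (connect1 ayy')).
have nyy' := adj_neq ayy'.
apply/negP: nef; rewrite negbK Ee Ef; apply/eqP.
move: yS y'S nyy'; rewrite !inE => /orP[] /eqP -> /orP[] /eqP ->; rewrite ?eqxx //.
by move=> _; rewrite setUC.
Qed.

Definition rt (v : T) : T := odflt (root adj v) [pick w | connect adj (root adj v) w && deg2 w].

Lemma rt_spec v : connect adj v (rt v) && deg2 (rt v).
Proof.
rewrite /rt; case: pickP => [w /andP[cw dw]|none].
  rewrite dw andbT; apply: connect_trans _ cw; exact: connect_root.
have [w /andP[cw dw]] := ex_deg2 v.
have := none w; rewrite dw andbT.
have -> // : connect adj (root adj v) w.
apply: connect_trans _ cw; rewrite csym; exact: connect_root.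
Qed.

Lemma rt_eq v w : connect adj v w -> rt v = rt w.
Proof.
move=> c; have E : root adj v = root adj w by apply/(rootP csym).
by rewrite /rt E.
Qed.

Definition R (x : T) : bool := rt x == x.

Lemma R_rt v : R (rt v).
Proof.
by rewrite /R -(rt_eq (_ : connect adj v (rt v))) //; case/andP: (rt_spec v).
Qed.

Lemma R_deg2 r : R r -> deg2 r.
Proof. by move/eqP=> E; have := rt_spec r; rewrite E => /andP[]. Qed.

Lemma adj_rt x y : adj x y -> rt x = rt y.
Proof. by move=> axy; apply: rt_eq; exact: connect1. Qed.

Lemma R_adj r y : R r -> adj r y -> ~~ R y.
Proof.
move=> /eqP Rr ary; apply/negP => /eqP Ry.
by move: (adj_neq ary); rewrite -Rr -Ry (adj_rt ary) eqxx.
Qed.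

Fixpoint reach (k : nat) : {set T} :=
  if k is k'.+1 then reach k' :|: [set y | [exists x in reach k', adj x y]]
  else [set x | R x].

Lemma reach_adj k x y : x \in reach k -> adj x y -> y \in reach k.+1.
Proof.
move=> hx axy; rewrite /= inE; apply/orP; right; rewrite inE.
by apply/existsP; exists x; rewrite hx axy.
Qed.

Lemma reach_path p x k : x \in reach k -> path adj x p -> last x p \in reach (k + size p).
Proof.
elim: p x k => [|y p IH] x k hx /=; first by rewrite addn0.
case/andP=> axy hp; rewrite addnS -addSn; apply: IH hp.
exact: reach_adj hx axy.
Qed.

Lemma reach_ex v : exists k, v \in reach k.
Proof.
have c : connect adj (rt v) v by rewrite csym; case/andP: (rt_spec v).
case/connectP: c => p hp ->; exists (0 + size p); apply: reach_path hp.
by rewrite /= inE R_rt.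
Qed.

Definition d (v : T) : nat := ex_minn (reach_ex v).

Lemma dP v : v \in reach (d v).
Proof. by rewrite /d; case: ex_minnP. Qed.

Lemma d_min v k : v \in reach k -> (d v <= k)%N.
Proof. by rewrite /d; case: ex_minnP => n _ hm /hm. Qed.

Lemma d0 v : (d v == 0%N) = R v.
Proof.
apply/idP/idP => [/eqP E | Rv].
  by have := dP v; rewrite E /= inE.
by rewrite -leqn0; apply: d_min; rewrite /= inE.
Qed.

Lemma d_adj u v : adj u v -> (d v <= (d u).+1)%N.
Proof. by move=> auv; apply: d_min; apply: reach_adj (dP u) auv. Qed.

Lemma d_par v : (0 < d v)%N -> exists x, adj x v && ((d x).+1 == d v).
Proof.
move=> pos; have := dP v; case E: (d v) pos => [|k] // _ /=.
rewrite inE => /orP[hk|].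
  by have := d_min hk; rewrite E ltnn.
rewrite inE => /existsP[x /andP[hx axv]]; exists x; rewrite axv /=.
have h1 := d_min hx; have h2 := d_adj axv; rewrite E in h2.
by apply/eqP; congr S; apply/eqP; rewrite eqn_leq h1.
Qed.

Lemma d_parity : forall k v, d v = k -> odd k = (a v != a (rt v)).
Proof.
elim=> [|k IH] v E.
  by have := d0 v; rewrite E eqxx => /esym /eqP ->; rewrite eqxx.
have [x /andP[axv /eqP Ex]] : exists x, adj x v && ((d x).+1 == d v) by apply: d_par; rewrite E.
have hx : d x = k by move: Ex; rewrite E => -[].
rewrite /= (IH x hx) -(adj_rt axv).
have := adj_a axv.
by case: (a x); case: (a v); case: (a (rt x)).
Qed.

Lemma d_adj2 u v : adj u v -> d v = (d u).+1 \/ d u = (d v).+1.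
Proof.
move=> auv; have h1 := d_adj auv; have h2 := d_adj (_ : adj v u); rewrite adjC in h2.
have h3 : d u != d v.
  apply/eqP => E.
  have := d_parity (erefl (d u)); rewrite E (d_parity (erefl (d v))) (adj_rt auv).
  have := adj_a auv; by case: (a u); case: (a v); case: (a (rt v)).
move: (h2 auv) h1 h3; lia.
Qed.

Definition p (x : T) : T := odflt x [pick y | adj y x && ((d y).+1 == d x)].

Lemma p_spec x : ~~ R x -> adj (p x) x /\ (d (p x)).+1 = d x.
Proof.
move=> nR; rewrite /p; case: pickP => [y /andP[ayx /eqP E]|none] //.
have : (0 < d x)%N by rewrite lt0n d0.
case/d_par => y hy; by have := none y; rewrite hy.
Qed.

Lemma p_adj x : ~~ R x -> adj x (p x).
Proof. by case/p_spec; rewrite adjC. Qed.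

Lemma p_d x : ~~ R x -> d x = (d (p x)).+1.
Proof. by case/p_spec. Qed.

Lemma R_d r : R r -> d r = 0%N.
Proof. by rewrite -d0 => /eqP. Qed.

Lemma root_child r y : R r -> adj r y -> p y = r.
Proof.
move=> Rr ary; have nRy := R_adj Rr ary.
have [apy dpy] := p_spec nRy.
have dy : (d y <= 1)%N by have := d_adj ary; rewrite (R_d Rr).
have : d (p y) = 0%N by move: dpy dy; lia.
move/eqP; rewrite d0 => /eqP Rpy.
move/eqP: Rr => Rr.
by rewrite -Rpy (adj_rt apy) -(adj_rt ary) Rr.
Qed.

Definition s1 (r : T) : T := odflt r [pick y | adj r y].
Definition s2 (r : T) : T := odflt r [pick z | adj r z && (z != s1 r)].

Lemma s_spec r : R r -> [/\ adj r (s1 r), adj r (s2 r) & s1 r != s2 r].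
Proof.
move=> /R_deg2 /existsP[y /existsP[z /and3P[nyz ary arz]]].
have a1 : adj r (s1 r).
  rewrite /s1; case: pickP => [w //|none]; by have := none y; rewrite ary.
have [a2 n2] : adj r (s2 r) /\ s2 r != s1 r.
  rewrite /s2; case: pickP => [w /andP[-> ->] //|none].
  have [E|NE] := eqVneq y (s1 r).
    by have := none z; rewrite arz /= -E eq_sym nyz.
  by have := none y; rewrite ary NE.
by split=> //; rewrite eq_sym.
Qed.

Definition special (x : T) : bool :=
  [&& ~~ R x, R (p x) & (x == s1 (p x)) || (x == s2 (p x))].

Definition idx (x : T) : nat := if x == s1 (p x) then 0%N else 1%N.

Lemma idx01 x : idx x = 0%N \/ idx x = 1%N.
Proof. by rewrite /idx; case: ifP; auto. Qed.

Definition kappa (x : T) : nat :=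
  if special x then (6 + 4 * idx x + 2 * m (p x) + m x)%N
  else (2 * (d x %% 3) + m x)%N.

Lemma kappa_lt x : (kappa x < 16)%N.
Proof.
rewrite /kappa; case: ifP => _.
  by case: (idx01 x) => ->; case: (m x); case: (m (p x)).
have := ltn_pmod (d x) (isT : (0 < 3)%N); case: (m x); lia.
Qed.

Lemma kappa_sp x : special x -> kappa x = (6 + 4 * idx x + 2 * m (p x) + m x)%N.
Proof. by rewrite /kappa => ->. Qed.

Lemma kappa_n x : ~~ special x -> kappa x = (2 * (d x %% 3) + m x)%N.
Proof. by rewrite /kappa => /negbTE ->. Qed.

Lemma child_n x : ~~ R (p x) -> ~~ special x.
Proof. by rewrite /special => /negbTE ->; rewrite andbF. Qed.

Lemma special_nR x : special x -> ~~ R x.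
Proof. by case/and3P. Qed.

Lemma special_pR x : special x -> R (p x).
Proof. by case/and3P. Qed.

Lemma special_d x : special x -> d x = 1%N.
Proof.
move=> sx; rewrite (p_d (special_nR sx)) R_d //; exact: special_pR.
Qed.

Lemma idx_diff x y : special x -> special y -> p x = p y -> x != y -> idx x != idx y.
Proof.
move=> /and3P[_ _ hx] /and3P[_ _ hy] E nxy; rewrite /idx E.
case: (eqVneq x (s1 (p y))) => ex; case: (eqVneq y (s1 (p y))) => ey //.
  by move: nxy; rewrite ex -ey eqxx.
move: hx hy; rewrite E (negbTE ex) (negbTE ey) /= => /eqP ex' /eqP ey'.
by move: nxy; rewrite ex' -ey' eqxx.
Qed.

Lemma s1_prop r : R r -> [/\ special (s1 r), p (s1 r) = r & idx (s1 r) = 0%N].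
Proof.
move=> Rr; case: (s_spec Rr) => a1 _ _.
have E := root_child Rr a1.
by rewrite /special /idx E Rr eqxx (R_adj Rr a1).
Qed.

Lemma s2_prop r : R r -> [/\ special (s2 r), p (s2 r) = r & idx (s2 r) = 1%N].
Proof.
move=> Rr; case: (s_spec Rr) => _ a2 n12.
have E := root_child Rr a2.
by rewrite /special /idx E Rr eqxx (R_adj Rr a2) orbT eq_sym (negbTE n12).
Qed.

Definition col (e : {set T}) : option 'I_16 :=
  if [pick x | ~~ R x && (e == [set x; p x])] is Some x then Some (inord (kappa x)) else None.

Lemma pe_uniq x y : ~~ R x -> ~~ R y -> [set x; p x] = [set y; p y] -> x = y.
Proof.
move=> nx ny /set2_eq [[]//|[E1 E2]].
have := p_d nx; have := p_d ny; rewrite -E1 E2; lia.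
Qed.

Lemma col_pe x : ~~ R x -> col [set x; p x] = Some (inord (kappa x)).
Proof.
move=> nx; rewrite /col; case: pickP => [y /andP[ny /eqP E]|none].
  by rewrite (pe_uniq ny nx (esym E)).
by have := none x; rewrite nx eqxx.
Qed.

Lemma col_some e k : col e = Some k -> exists x, [/\ ~~ R x, e = [set x; p x] & k = inord (kappa x)].
Proof.
rewrite /col; case: pickP => [y /andP[ny /eqP E] [<-]|//].
by exists y.
Qed.

Lemma sat_core u v x0 :
  ~~ R x0 -> (u == x0) || (u == p x0) ->
  [set x0; p x0] != [set u; v] ->
  (forall x, ~~ R x -> x != x0 -> (x \in [set u; v]) || (p x \in [set u; v]) ->
     kappa x != kappa x0) ->
  satisfied g col [set u; v].
Proof.
move=> nx0 hu ne hk.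
exists (inord (kappa x0)); exists [set x0; p x0].
  rewrite /Eopen /Eclosed !inE ne /=; apply/andP; split.
    by apply: H_edges; exact: p_adj.
  apply/set0Pn; exists u; rewrite !inE eqxx /= andbT.
  by case/orP: hu => /eqP ->; rewrite eqxx ?orbT.
split; first exact: col_pe.
move=> b; rewrite !inE => /andP[nb /andP[_ hint]] hc.
case/col_some: hc => x [nx Eb kx]; subst b.
have kk : kappa x = kappa x0.
  by move/(congr1 val): kx; rewrite /= !inordK // kappa_lt.
have nxx0 : x != x0 by apply: contraNneq nb => ->.
case/set0Pn: hint => w; rewrite !inE => /andP[hw1 hw2].
have : (x \in [set u; v]) || (p x \in [set u; v]).
  by case/orP: hw1 => /eqP <-; rewrite !inE hw2 ?orbT.
by move/(hk x nx nxx0); rewrite kk eqxx.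
Qed.


Lemma kn_lt6 x : ~~ special x -> (kappa x < 6)%N.
Proof.
move/kappa_n ->; have := ltn_pmod (d x) (isT : (0 < 3)%N); case: (m x); lia.
Qed.

Lemma ks_ge6 x : special x -> (6 <= kappa x)%N.
Proof. by move/kappa_sp ->; lia. Qed.

Lemma enc_inj (i j : nat) (b b' c c' : bool) : (i <= 1)%N -> (j <= 1)%N ->
  (6 + 4 * i + 2 * b + c = 6 + 4 * j + 2 * b' + c')%N -> [/\ i = j, b = b' & c = c'].
Proof.
move=> hi hj; case: b; case: b'; case: c; case: c' => /= E; split => //; lia.
Qed.

Lemma kappa_sp_neq x y : special x -> special y ->
  idx x != idx y \/ m (p x) != m (p y) \/ m x != m y -> kappa x != kappa y.
Proof.
move=> sx sy h; rewrite (kappa_sp sx) (kappa_sp sy); apply/negP => /eqP E.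
have hi : (idx x <= 1)%N by case: (idx01 x) => ->.
have hj : (idx y <= 1)%N by case: (idx01 y) => ->.
case: (enc_inj hi hj E) => e1 e2 e3.
by case: h => [|[]]; rewrite ?e1 ?e2 ?e3 eqxx.
Qed.


Lemma neq6 x y : (kappa x < 6)%N -> (6 <= kappa y)%N -> kappa x != kappa y.
Proof. by move=> h1 h2; rewrite neq_ltn (leq_trans h1 h2). Qed.

Lemma L_spec u v : special u -> ~~ R v -> u != v ->
  (special v -> p u != p v -> m u != m v) -> satisfied g col [set u; v].
Proof.
move=> su nRv nuv hm; have nRu := special_nR su.
apply: (sat_core nRu); first by rewrite eqxx.
  apply/negP => /eqP /set2_eq [[_ E]|[E _]].
    by move: nRv; rewrite -E (special_pR su).
  by rewrite E eqxx in nuv.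
move=> x nx nxu; rewrite !inE (negbTE nxu) /= => h.
have Hn : forall w, ~~ R w -> p x = w -> kappa x != kappa u.
  move=> w nw E; have sx : ~~ special x by apply: child_n; rewrite E.
  exact: neq6 (kn_lt6 sx) (ks_ge6 su).
case/or3P: h => [/eqP Ex | /eqP E | /eqP E]; last 2 first.
- exact: (Hn u nRu).
- exact: (Hn v nRv).
subst x; case: (boolP (special v)) => sv.
  rewrite eq_sym; apply: kappa_sp_neq => //.
  case: (eqVneq (p u) (p v)) => E.
    by left; apply: idx_diff.
  by right; right; apply: hm.
exact: neq6 (kn_lt6 sv) (ks_ge6 su).
Qed.

Lemma L_root u v : R u -> u != v -> (R v -> m u != m v) -> satisfied g col [set u; v].
Proof.
move=> Ru nuv hm.
have [x0 [sx0 px0 ix0]] : exists x0, [/\ special x0, p x0 = u &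
    idx x0 = if special v && (idx v == 0%N) then 1%N else 0%N].
  by case: ifP => _; [exists (s2 u); case: (s2_prop Ru) | exists (s1 u); case: (s1_prop Ru)].
have nx0 := special_nR sx0.
apply: (sat_core nx0); first by rewrite px0 eqxx orbT.
  rewrite px0; apply/negP => /eqP /set2_eq [[_ E]|[E _]].
    by rewrite E eqxx in nuv.
  move: ix0; rewrite -E sx0 /=; case: ifP => [/eqP -> //|].
  by move=> /negbT /eqP h /h.
move=> x nx nxx0; rewrite !inE => h.
have Hn : ~~ special x -> kappa x != kappa x0.
  by move=> sx; exact: neq6 (kn_lt6 sx) (ks_ge6 sx0).
case/orP: h => [/orP[] | /orP[]] /eqP E.
- by move: nx; rewrite E Ru.
- subst x; case: (boolP (special v)) => sv; last exact: Hn.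
  apply: kappa_sp_neq => //; left; rewrite ix0 sv /=.
  by case: (idx01 v) => ->.
- case: (boolP (special x)) => sx; last exact: Hn.
  apply: kappa_sp_neq => //; left; apply: idx_diff => //; by rewrite px0.
- case: (boolP (R v)) => Rv.
    case: (boolP (special x)) => sx; last exact: Hn.
    apply: kappa_sp_neq => //; right; left; rewrite E px0 eq_sym; exact: hm.
  by apply: Hn; apply: child_n; rewrite E.
Qed.

Lemma L_norm u v : ~~ R u -> ~~ R v -> ~~ special u -> ~~ special v ->
  ((d u %% 3 = d v %% 3) /\ m u != m v) \/ (d v %% 3 = (d u).+1 %% 3) ->
  satisfied g col [set u; v].
Proof.
move=> nRu nRv su sv hyp.
have du := p_d nRu.
have hyp' : d u %% 3 = d v %% 3 \/ d v %% 3 = (d u).+1 %% 3 by case: hyp => [[]|]; auto.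
apply: (sat_core nRu); first by rewrite eqxx.
  apply/negP => /eqP /set2_eq [[_ E]|[_ E]].
    rewrite E in du; exact: (ar1 du hyp').
  by move: du; rewrite E => /n_Sn.
move=> x nx nxu; rewrite !inE (negbTE nxu) /= (kappa_n su) => h.
case/or3P: h => [/eqP Ex | /eqP E | /eqP E].
- by subst x; rewrite (kappa_n sv); exact: arKv.
- have sx : ~~ special x by apply: child_n; rewrite E.
  by rewrite (kappa_n sx) (p_d nx) E; exact: arKc1.
- have sx : ~~ special x by apply: child_n; rewrite E.
  by rewrite (kappa_n sx) (p_d nx) E; exact: arKc2.
Qed.

Lemma sat_edge u v : g u v -> (adj u v \/ m u != m v) -> satisfied g col [set u; v].
Proof.
move=> guv hadj.
have nuv : u != v by apply: contraTneq guv => ->; rewrite girr.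
case: (boolP (R u)) => Ru.
  apply: L_root => // Rv; case: hadj => [auv|//].
  by move: (R_adj Ru auv); rewrite Rv.
case: (boolP (R v)) => Rv.
  rewrite setUC; apply: L_root => //; first by rewrite eq_sym.
  by move=> Ru'; rewrite Ru' in Ru.
have dd : adj u v -> d u %% 3 <> d v %% 3 by move=> auv; apply: ar_adj; exact: d_adj2.
case: (boolP (special u)) => su.
  apply: L_spec => // sv npq; case: hadj => // auv; exfalso.
  by apply: (dd auv); rewrite (special_d su) (special_d sv).
case: (boolP (special v)) => sv.
  rewrite setUC; apply: L_spec => //; first by rewrite eq_sym.
  by move=> su'; rewrite su' in su.
have hm : d u %% 3 = d v %% 3 -> m u != m v.
  by move=> E; case: hadj => // auv; case: (dd auv).
case: (ar_tri (d u) (d v)) => E.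
- by apply: L_norm => //; left; split => //; exact: hm.
- by apply: L_norm => //; right.
- by rewrite setUC; apply: L_norm => //; right.
Qed.

Lemma main_sec : exists c : pcolouring T 16, forall e, e \in edges g -> satisfied g c e.
Proof.
exists col => e he.
case/edgesP: (he) => u [v [guv Ee]]; subst e.
apply: sat_edge => //.
have : [set u; v] \in H :|: M by rewrite HM.
rewrite inE => /orP[hH|hM]; [left | right] => //.
apply: m_prop hM _; by apply: contraTneq guv => ->; rewrite girr.
Qed.
End Main.

Theorem mainTheorem8 (T : finType) (g : rel T) :
  simple_graph g ->
  (exists H M : {set {set T}},
     [/\ H :|: M = edges g, [disjoint H & M],
         bipartite_edges H, spanning_no_K2_component H & matching M]) ->
  exists c : pcolouring T 16, forall a, a \in edges g -> satisfied g c a.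
Proof.
move=> [gsym girr] [H [M [HM _ [col Hcol] Hsp Mm]]].
exact: (main_sec gsym girr HM Hcol Hsp Mm).
Qed.
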